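(* Let $\rho>0$, $\xi>0$, and $H_0=\frac{1}{2(1+\rho r^2)}\big(P_r^2+\frac{P_\phi^2}{r^2}+\xi r^2\big)$ on $(r,\phi)\in(0,\infty)\times\mathbb{S}^1$, with quadratic integrals $S_1=\cos(2\phi)P_r\frac{P_\phi}{r}+\sin(2\phi)\big(H_0-\frac{P_\phi^2}{r^2}\big)$, $S_2=-\sin(2\phi)P_r\frac{P_\phi}{r}+\cos(2\phi)\big(H_0-\frac{P_\phi^2}{r^2}\big)$. Consider the closed trajectories on level sets $H_0=E$, $P_\phi=L>0$ with $E_+<E<\xi/(2\rho)$, where $E_+=L^2(-\rho+\sqrt{\rho^2+\xi/L^2})$, with $\phi$ normalized so that $\phi=0$ where $r$ is minimal. Then the action coordinates $I_\phi=\frac1{2\pi}\oint P_\phi\,d\phi$, $I_r=\frac1{2\pi}\oint P_r\,dr$ are $$I_\phi=L,\qquad J\equiv I_r+I_\phi=\frac{E}{\sqrt{\xi-2\rho E}},$$ the Hamiltonian is $H(J)=J\big(\sqrt{\xi+\rho^2J^2}-\rho J\big)$, and the quadratic integrals take the values $$S_1=0,\qquad S_2=-\sqrt{J^2-I_\phi^2}\,\big(\sqrt{\xi+\rho^2J^2}-\rho J\big).$$ *)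

(* Defs.v *)
From Stdlib Require Import Reals Lra.
From Coquelicot Require Import Coquelicot.
Open Scope R_scope.

Definition H0 (rho xi r pr pphi : R) : R :=
  / (2 * (1 + rho * r ^ 2)) * (pr ^ 2 + pphi ^ 2 / r ^ 2 + xi * r ^ 2).

Definition S1 (rho xi r phi pr pphi : R) : R :=
  cos (2 * phi) * pr * (pphi / r)
  + sin (2 * phi) * (H0 rho xi r pr pphi - pphi ^ 2 / r ^ 2).

Definition S2 (rho xi r phi pr pphi : R) : R :=
  - sin (2 * phi) * pr * (pphi / r)
  + cos (2 * phi) * (H0 rho xi r pr pphi - pphi ^ 2 / r ^ 2).

Definition E_plus (rho xi L : R) : R := L ^ 2 * (- rho + sqrt (rho ^ 2 + xi / L ^ 2)).

(* On the level set H0 = E, P_phi = L, the radial momentum satisfies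
   P_r^2 = Qrad r  (obtained by solving H0 r P_r L = E for P_r^2). *)
Definition Qrad (rho xi E L r : R) : R :=
  2 * (1 + rho * r ^ 2) * E - L ^ 2 / r ^ 2 - xi * r ^ 2.

(* I_r = (1/2pi) \oint P_r dr over the closed trajectory. *)
Definition Ir (rho xi E L a b : R) : R :=
  / (2 * PI) * (4 * RInt (fun r => sqrt (Qrad rho xi E L r)) a b).

Definition Iphi (L : R) : R := / (2 * PI) * RInt (fun _ => L) 0 (2 * PI).

Definition hamilton_solution (rho xi : R) (r phi pr pphi : R -> R) : Prop :=
  forall t,
    is_derive r t (Derive (fun p => H0 rho xi (r t) p (pphi t)) (pr t)) /\
    is_derive phi t (Derive (fun p => H0 rho xi (r t) (pr t) p) (pphi t)) /\
    is_derive pr t (- Derive (fun x => H0 rho xi x (pr t) (pphi t)) (r t)) /\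
    is_derive pphi t 0.

(* Main.v *)
Require Import Defs.
From Stdlib Require Import Reals Lra.
From Coquelicot Require Import Coquelicot.
Open Scope R_scope.

Lemma Iphi_eq L : Iphi L = L.
Proof.
  unfold Iphi. rewrite RInt_const. simpl. unfold scal; simpl; unfold mult; simpl.
  field. apply PI_neq0.
Qed.

Lemma Eplus_pos rho xi L : 0 < rho -> 0 < xi -> 0 < L -> 0 < E_plus rho xi L.
Proof.
  intros. unfold E_plus. apply Rmult_lt_0_compat. nra.
  assert (rho < sqrt (rho^2 + xi/L^2)).
  { rewrite <- (sqrt_pow2 rho) at 1 by lra. apply sqrt_lt_1. nra.
    assert (0 < xi / L^2) by (apply Rdiv_lt_0_compat; nra). nra.
    assert (0 < xi / L^2) by (apply Rdiv_lt_0_compat; nra). nra. }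
  lra.
Qed.

Lemma disc_pos rho xi E L : 0 < rho -> 0 < xi -> 0 < L -> E_plus rho xi L < E ->
  (xi - 2*rho*E) * L^2 < E^2.
Proof.
  intros. unfold E_plus in H2.
  set (s := sqrt (rho ^ 2 + xi / L ^ 2)) in *.
  assert (Hs : s * s = rho^2 + xi/L^2).
  { unfold s. apply sqrt_sqrt. assert (0 < xi / L^2) by (apply Rdiv_lt_0_compat; nra). nra. }
  assert (0 <= s) by apply sqrt_pos.
  assert (Hx : xi = L^2 * (s*s - rho^2)). { rewrite Hs. field. lra. }
  rewrite Hx. 
  assert (0 < L^2) by nra.
  (* E > L^2 (s - rho) >= 0 ; E^2 + 2 rho L^2 E - L^4 (s^2-rho^2) = (E + L^2 rho)^2 - L^4 s^2 *)
  assert (H5 : E + L^2*rho > L^2 * s) by nra.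
  assert (H6 : 0 < (E + L^2*rho - L^2*s) * (E + L^2*rho + L^2*s)).
  { apply Rmult_lt_0_compat. lra. nra. }
  nra.
Qed.

Lemma key_sqrt rho xi E : 0 < rho -> 0 < E -> E < xi / (2 * rho) ->
  let J := E / sqrt (xi - 2 * rho * E) in
  sqrt (xi + rho ^ 2 * J ^ 2) - rho * J = sqrt (xi - 2*rho*E).
Proof.
  intros HR HE HE2 J.
  assert (HD : 0 < xi - 2*rho*E).
  { apply Rmult_lt_compat_r with (r := 2*rho) in HE2; [|lra].
    unfold Rdiv in HE2. rewrite Rmult_assoc, Rinv_l in HE2; lra. }
  set (d := sqrt (xi - 2*rho*E)) in *.
  assert (Hd : d*d = xi - 2*rho*E) by (apply sqrt_sqrt; lra).
  assert (Hd0 : 0 < d) by (apply sqrt_lt_R0; lra).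
  assert (xi + rho^2 * J^2 = ((xi - rho*E)/d)^2).
  { unfold J. field_simplify; [| lra..]. replace (d^2) with (d*d) by ring. rewrite Hd. f_equal. ring. }
  rewrite H, sqrt_pow2.
  2:{ apply Rdiv_le_0_compat; [|lra]. nra. }
  unfold J. apply (Rmult_eq_reg_r d); [|lra]. field_simplify; [|lra]. 
  replace (d^2) with (d*d) by ring. rewrite Hd. field.
Qed.


Lemma is_derive_eq (f : R -> R) t l l' : is_derive f t l -> l = l' -> is_derive f t l'.
Proof. intros H ->; exact H. Qed.

Lemma const_of_deriv0 (f : R -> R) : (forall t, is_derive f t 0) -> forall x y, f x = f y.
Proof.
  intros H x y.
  destruct (Rtotal_order x y) as [Hl|[He|Hl]].
  - apply eq_is_derive; auto.
  - subst; auto.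
  - symmetry; apply eq_is_derive; auto.
Qed.

Definition dHr rho xi r p q :=
  ((-2*q^2/r^3 + 2*xi*r)*(1+rho*r^2) - (p^2+q^2/r^2+xi*r^2)*(2*rho*r)) / (2*(1+rho*r^2)^2).

Lemma dH_pr rho xi r p q : 0 < rho -> Derive (fun p => H0 rho xi r p q) p = p / (1+rho*r^2).
Proof.
  intros Hrho. apply is_derive_unique. unfold H0. auto_derive. nra. field. nra.
Qed.

Lemma dH_pp rho xi r p q : 0 < rho -> r <> 0 -> Derive (fun q => H0 rho xi r p q) q = q / (r^2 * (1+rho*r^2)).
Proof.
  intros Hrho Hrr. apply is_derive_unique. unfold H0. auto_derive. repeat split; auto; try nra.
  field. split; auto. nra.
Qed.

Lemma dH_r rho xi r p q : 0 < rho -> r <> 0 -> Derive (fun x => H0 rho xi x p q) r = dHr rho xi r p q.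
Proof.
  intros Hrho Hrr. apply is_derive_unique. unfold H0, dHr. auto_derive. repeat split; auto; try nra.
  field. split; auto. nra.
Qed.

Section Flow.
Variables (rho xi : R) (r phi pr pphi : R -> R).
Hypothesis Hrho : 0 < rho.
Hypothesis HS : hamilton_solution rho xi r phi pr pphi.
Hypothesis Hr : forall t, 0 < r t.

Lemma Dr t : Derive (fun x => r x) t = pr t / (1 + rho * r t ^ 2).
Proof. destruct (HS t) as [H1 _]. change (Derive r t = pr t / (1 + rho * r t ^ 2)). rewrite (is_derive_unique _ _ _ H1). apply dH_pr; auto. Qed.
Lemma Dphi t : Derive (fun x => phi x) t = pphi t / (r t ^ 2 * (1 + rho * r t ^ 2)).
Proof. destruct (HS t) as [_ [H1 _]]. change (Derive phi t = pphi t / (r t ^ 2 * (1 + rho * r t ^ 2))). rewrite (is_derive_unique _ _ _ H1). apply dH_pp; auto. specialize (Hr t); lra. Qed.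
Lemma Dpr t : Derive (fun x => pr x) t = - dHr rho xi (r t) (pr t) (pphi t).
Proof. destruct (HS t) as [_ [_ [H1 _]]]. change (Derive pr t = - dHr rho xi (r t) (pr t) (pphi t)). rewrite (is_derive_unique _ _ _ H1). rewrite dH_r; auto. specialize (Hr t); lra. Qed.
Lemma Dpphi t : Derive (fun x => pphi x) t = 0.
Proof. destruct (HS t) as [_ [_ [_ H1]]]. exact (is_derive_unique _ _ _ H1). Qed.
Lemma exd t : ex_derive r t /\ ex_derive phi t /\ ex_derive pr t /\ ex_derive pphi t.
Proof. destruct (HS t) as [H1 [H2 [H3 H4]]]. repeat split; eexists; eassumption. Qed.

Ltac sides t := 
  destruct (exd t) as [E1 [E2 [E3 E4]]]; pose proof (Hr t);
  repeat split; auto; try nra.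
Ltac fin t := pose proof (Hr t);
  rewrite ?Dr, ?Dphi, ?Dpr, ?Dpphi; unfold dHr;
  match goal with |- ?a = ?b => change (@eq R a b) end;
  field; repeat split; nra.

Lemma pphi_const x y : pphi x = pphi y.
Proof. apply const_of_deriv0. intro t. destruct (HS t) as [_ [_ [_ H1]]]. exact H1. Qed.

Lemma H0_const x y : H0 rho xi (r x) (pr x) (pphi x) = H0 rho xi (r y) (pr y) (pphi y).
Proof.
  apply (const_of_deriv0 (fun t => H0 rho xi (r t) (pr t) (pphi t))). intro t.
  eapply is_derive_eq; [unfold H0; auto_derive; [sides t | reflexivity] | fin t].
Qed.
Lemma S1_const x y : S1 rho xi (r x) (phi x) (pr x) (pphi x) = S1 rho xi (r y) (phi y) (pr y) (pphi y).
Proof.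
  apply (const_of_deriv0 (fun t => S1 rho xi (r t) (phi t) (pr t) (pphi t))). intro t.
  eapply is_derive_eq; [unfold S1, H0; auto_derive; [sides t | reflexivity] | fin t].
Qed.
Lemma S2_const x y : S2 rho xi (r x) (phi x) (pr x) (pphi x) = S2 rho xi (r y) (phi y) (pr y) (pphi y).
Proof.
  apply (const_of_deriv0 (fun t => S2 rho xi (r t) (phi t) (pr t) (pphi t))). intro t.
  eapply is_derive_eq; [unfold S2, H0; auto_derive; [sides t | reflexivity] | fin t].
Qed.
End Flow.

Lemma min_deriv0 (f:R->R) c l : is_derive f c l -> (forall x, f c <= f x) -> l = 0.
Proof.
  intros H Hm. apply is_derive_Reals in H.
  pose (pr := exist (fun l => derivable_pt_lim f c l) l H : derivable_pt f c).
  rewrite <- (derive_pt_eq_0 f c l pr H).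
  apply (deriv_minimum f (c-1) (c+1) c pr); try lra. intros; auto.
Qed.

Lemma energy_poly rho xi r p q E : 0 < rho -> 0 < r -> H0 rho xi r p q = E ->
  (xi - 2*rho*E) * (r^2)^2 - 2*E*r^2 + q^2 = - p^2 * r^2.
Proof.
  intros Hr Hr0 HH. unfold H0 in HH.
  assert (Hne : 2 * (1 + rho * r^2) <> 0) by nra.
  assert (HH' : p ^ 2 + q ^ 2 / r ^ 2 + xi * r ^ 2 = 2 * (1 + rho * r^2) * E).
  { rewrite <- HH. field. split; nra. }
  assert (HH'' : (p ^ 2 + q ^ 2 / r ^ 2 + xi * r ^ 2) * r^2 = 2 * (1 + rho * r^2) * E * r^2) by (rewrite HH'; auto).
  replace ((p ^ 2 + q ^ 2 / r ^ 2 + xi * r ^ 2) * r^2) with (p^2*r^2 + q^2 + xi*(r^2)^2) in HH'' by (field; lra).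
  lra.
Qed.


Lemma dyn rho xi E L (r phi pr pphi : R -> R) t0 :
  0 < rho -> 0 < xi -> 0 < L -> E < xi / (2 * rho) ->
  (xi - 2*rho*E) * L^2 < E^2 -> 0 < E ->
  hamilton_solution rho xi r phi pr pphi ->
  (forall t, 0 < r t) ->
  H0 rho xi (r 0) (pr 0) (pphi 0) = E -> pphi 0 = L ->
  (forall t, r t0 <= r t) -> phi t0 = 0 ->
  forall t,
    S1 rho xi (r t) (phi t) (pr t) (pphi t) = 0 /\
    S2 rho xi (r t) (phi t) (pr t) (pphi t) = - sqrt (E^2 - (xi - 2*rho*E) * L^2).
Proof.
  intros Hrho Hxi HL HE2 Hdisc HE HS Hr HH0 Hp0 Hmin Hphi t.
  set (D := xi - 2*rho*E) in *.
  assert (HD : 0 < D).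
  { unfold D. apply Rmult_lt_compat_r with (r := 2*rho) in HE2; [|lra].
    unfold Rdiv in HE2. rewrite Rmult_assoc, Rinv_l in HE2; lra. }
  assert (Hpp : forall t, pphi t = L) by (intro; rewrite <- Hp0; apply (pphi_const rho xi r phi pr pphi HS)).
  assert (HEt : forall t, H0 rho xi (r t) (pr t) L = E).
  { intro s. rewrite <- (Hpp s), <- HH0. apply (H0_const rho xi r phi pr pphi Hrho HS Hr). }
  assert (Hq : forall s, D * (r s ^2)^2 - 2*E*r s^2 + L^2 = - pr s ^2 * r s ^2).
  { intro s. apply (energy_poly rho xi (r s) (pr s) L E Hrho (Hr s) (HEt s)). }
  assert (Hpr0 : pr t0 = 0).
  { destruct (HS t0) as [H1 _]. rewrite dH_pr in H1 by auto.
    apply min_deriv0 in H1; auto. pose proof (Hr t0).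
    assert (0 < 1 + rho * r t0 ^2) by nra.
    apply (f_equal (fun x => x * (1 + rho * r t0 ^ 2))) in H1. field_simplify in H1; lra. }
  set (u0 := r t0 ^ 2).
  assert (Hq0 : D * u0^2 - 2*E*u0 + L^2 = 0).
  { unfold u0. rewrite Hq, Hpr0. ring. }
  assert (Hu0 : 0 < u0) by (unfold u0; pose proof (Hr t0); nra).
  assert (Hle : D * u0 <= E).
  { destruct (Rle_or_lt (D*u0) E) as [h|h]; auto. exfalso.
    assert (Hall : forall s, pr s = 0 /\ r s = r t0).
    { intro s. pose proof (Hq s). pose proof (Hmin s). pose proof (Hr s). pose proof (Hr t0).
      set (u := r s ^ 2) in *.
      assert (u0 <= u) by (unfold u, u0; nra).
      assert (Hqq : (D*u^2 - 2*E*u + L^2) - (D*u0^2 - 2*E*u0 + L^2) = (u - u0) * (D*(u+u0) - 2*E)) by ring.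
      assert (0 <= pr s ^2 * u) by (unfold u; nra).
      assert (HP : 0 < D*(u+u0) - 2*E) by nra.
      assert (HP2 : (u-u0)*(D*(u+u0)-2*E) <= 0) by lra.
      assert (Huu : u = u0).
      { destruct (Rle_lt_or_eq_dec u0 u) as [hl|he]; auto.
        assert (0 < (u-u0)*(D*(u+u0)-2*E)) by (apply Rmult_lt_0_compat; lra). lra. }
      assert (Hp2 : pr s ^ 2 * u0 = 0).
      { rewrite Huu in H. lra. }
      split.
      + assert (pr s ^ 2 = 0) by (apply (Rmult_eq_reg_r u0); lra). 
        apply Rsqr_0_uniq. unfold Rsqr. nra. 
      + unfold u, u0 in Huu. assert (0 <= (r s - r t0)*(r s + r t0)) by nra. nra. }
    destruct (HS t0) as [_ [_ [H3 _]]].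
    assert (Hd0 : Derive pr t0 = 0).
    { rewrite (Derive_ext pr (fun _ => 0)). apply Derive_const. intro s; apply Hall. }
    rewrite (is_derive_unique _ _ _ H3) in Hd0.
    rewrite dH_r, Hpr0, Hpp in Hd0 by (auto; pose proof (Hr t0); lra).
    unfold dHr in Hd0. pose proof (Hr t0).
    assert (HN : xi * u0^2 - 2*rho*L^2*u0 - L^2 = 0).
    { match type of Hd0 with - (?n / ?d) = 0 =>
        assert (Hnum : n = 0);
        [ assert (Hx : n = - (- (n / d)) * d) by (field; nra); rewrite Hx, Hd0; ring
        | assert (Hy : xi * u0^2 - 2*rho*L^2*u0 - L^2 = (r t0 ^ 3 / 2) * n) by (unfold u0; field; lra);
          rewrite Hy, Hnum; ring ]
      end. }
    assert (HN2 : (xi * u0^2 - 2*rho*L^2*u0 - L^2) + (1 + 2*rho*u0) * (D * u0^2 - 2*E*u0 + L^2) = u0 * (D*u0 - E) * (2*rho*u0+2)) by (unfold D; ring).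
    rewrite HN, Hq0 in HN2. assert (0 < u0*(D*u0-E)*(2*rho*u0+2)) by (repeat apply Rmult_lt_0_compat; nra). lra. }
  assert (HS1 : S1 rho xi (r t0) (phi t0) (pr t0) (pphi t0) = 0).
  { unfold S1. rewrite Hphi, Hpr0. replace (2*0) with 0 by ring. rewrite sin_0. ring. }
  assert (HS2 : S2 rho xi (r t0) (phi t0) (pr t0) (pphi t0) = D*u0 - E).
  { unfold S2. rewrite Hphi, Hpp, HEt, Hpr0. replace (2*0) with 0 by ring. rewrite sin_0, cos_0. 
    change (r t0 ^ 2) with u0. assert (HL2 : L^2 = 2*E*u0 - D*u0^2) by (clear -Hq0; clearbody D u0; lra). rewrite HL2. pose proof (Hr t0). field; repeat split; lra. }
  split.
  - rewrite (S1_const rho xi r phi pr pphi Hrho HS Hr t t0). exact HS1.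
  - rewrite (S2_const rho xi r phi pr pphi Hrho HS Hr t t0), HS2.
    assert (E^2 - D*L^2 = (E - D*u0)^2) by nra.
    rewrite H, sqrt_pow2 by lra. ring.
Qed.


Lemma asin_ge1 x : 1 <= x -> asin x = PI/2.
Proof. intros. unfold asin. destruct (Rle_dec x (-1)); [lra|]. destruct (Rle_dec 1 x); lra. Qed.

Lemma cont_asin_1 : continuous asin 1.
Proof.
  apply continuity_pt_filterlim. intros eps Heps.
  pose proof PI_RGT_0 as HPI.
  set (e := Rmin eps (PI/2)).
  assert (He : 0 < e) by (unfold e; apply Rmin_glb_lt; lra).
  assert (He2 : e <= PI/2) by apply Rmin_r.
  assert (He3 : e <= eps) by apply Rmin_l.
  exists (1 - sin (PI/2 - e)). split.
  { assert (sin (PI/2 - e) < sin (PI/2)) by (apply sin_increasing_1; lra).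
    rewrite sin_PI2 in H. lra. }
  intros x [_ Hx]. simpl in *. unfold R_dist in *. rewrite asin_1.
  destruct (Rle_dec 1 x) as [h|h].
  - rewrite asin_ge1 by lra. replace (PI/2 - PI/2) with 0 by ring. rewrite Rabs_R0. lra.
  - assert (0 <= sin (PI/2 - e)) by (apply sin_ge_0; lra).
    rewrite Rabs_left1 in Hx by lra.
    assert (Hx1 : -1 < x < 1) by lra.
    pose proof (asin_bound x).
    assert (PI/2 - e < asin x).
    { destruct (Rlt_or_le (PI/2 - e) (asin x)) as [h'|h']; auto.
      destruct (Rle_lt_or_eq_dec _ _ h') as [h''|h''].
      - assert (Hs : sin (asin x) < sin (PI/2 - e)) by (apply sin_increasing_1; lra).
        rewrite sin_asin in Hs by lra. lra.
      - assert (Hs : sin (asin x) = sin (PI/2 - e)) by (rewrite h''; auto).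
        rewrite sin_asin in Hs by lra. lra. }
    rewrite Rabs_left1 by lra. lra.
Qed.

Lemma cont_asin_m1 : continuous asin (-1).
Proof.
  apply (continuous_ext (fun y => - asin (- y))).
  { intro y. rewrite asin_opp. apply Ropp_involutive. }
  apply continuity_pt_filterlim.
  apply (continuity_pt_opp (fun y => asin (- y))).
  apply (continuity_pt_comp (fun y => - y) asin).
  apply continuity_pt_opp, continuity_pt_id.
  apply continuity_pt_filterlim. replace (- (-1)) with 1 by ring. apply cont_asin_1.
Qed.

Lemma is_derive_asin x : -1 < x < 1 -> is_derive asin x (/ sqrt (1 - x^2)).
Proof.
  intros H. apply is_derive_Reals.
  pose proof (derive_pt_asin x H) as Hd.
  apply derive_pt_eq_1 in Hd. unfold Rsqr in Hd.
  replace (x^2) with (x*x) by ring. replace (/ sqrt (1 - x*x)) with (1 / sqrt (1 - x*x)) by (unfold Rdiv; ring). exact Hd.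
Qed.

Lemma is_derive_RInt_in (f : R -> R) a c d x : c < a < d -> c < x < d ->
  (forall z, c < z < d -> continuous f z) ->
  is_derive (fun y => RInt f a y) x (f x).
Proof.
  intros Ha Hx Hf.
  apply (is_derive_RInt f (fun y => RInt f a y) a x); [| apply Hf; auto].
  assert (He : 0 < Rmin (x - c) (d - x)) by (apply Rmin_glb_lt; lra).
  exists (mkposreal _ He). intros y Hy.
  change (Rabs (y - x) < Rmin (x - c) (d - x)) in Hy.
  assert (Hy1 : Rabs (y - x) < x - c) by (apply (Rlt_le_trans _ _ _ Hy); apply Rmin_l).
  assert (Hy2 : Rabs (y - x) < d - x) by (apply (Rlt_le_trans _ _ _ Hy); apply Rmin_r).
  apply Rabs_def2 in Hy1. apply Rabs_def2 in Hy2.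
  apply (RInt_correct f a y). apply ex_RInt_continuous. intros z Hz. apply Hf.
  split.
  - eapply Rlt_le_trans; [|apply Hz]. apply Rmin_glb_lt; lra.
  - eapply Rle_lt_trans; [apply Hz|]. apply Rmax_lub_lt; lra.
Qed.

Lemma FTC_open (f F : R -> R) a b c d : c < a -> a < b -> b < d ->
  (forall x, c < x < d -> continuous f x) ->
  (forall x, a < x < b -> is_derive F x (f x)) ->
  continuous F a -> continuous F b -> RInt f a b = F b - F a.
Proof.
  intros Hca Hab Hbd Hf HF HFa HFb.
  set (G := fun x => RInt f a x - F x).
  assert (HG : forall x, a < x < b -> is_derive G x 0).
  { intros x Hx. unfold G. replace 0 with (f x - f x) by ring.
    apply (is_derive_minus (fun y => RInt f a y) F).
    apply (is_derive_RInt_in f a c d); auto; lra. apply HF; auto. }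
  assert (pr : forall x, a < x < b -> derivable_pt G x).
  { intros x Hx. exists 0. apply is_derive_Reals. apply HG; auto. }
  assert (Hc : forall x, a <= x <= b -> continuity_pt G x).
  { intros x Hx. apply continuity_pt_filterlim. unfold G.
    apply (continuous_minus (fun y => RInt f a y) F).
    - apply ex_derive_continuous. eexists. apply (is_derive_RInt_in f a c d); auto; lra.
    - destruct (Rle_lt_or_eq_dec a x) as [h1|h1]; [lra| |subst; auto].
      destruct (Rle_lt_or_eq_dec x b) as [h2|h2]; [lra| |subst; auto].
      apply ex_derive_continuous. eexists. apply HF; auto. }
  assert (Hd : forall x (P : a < x < b), derive_pt G x (pr x P) = 0).
  { intros x P. apply derive_pt_eq_0. apply is_derive_Reals. apply HG; auto. }
  pose proof (null_derivative_loc G a b pr Hc Hd) as Hk.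
  assert (Hb : G b = G a) by (apply Hk; lra).
  unfold G in Hb. rewrite RInt_point in Hb. unfold zero in Hb; simpl in Hb. lra.
Qed.




Definition RR A B u := (u - A) * (B - u).
Definition h1 A B u := (2*u - A - B)/(B - A).
Definition h2 A B u := ((A+B)*u - 2*A*B)/(u*(B-A)).
Definition As1 A B u := asin (h1 A B u).
Definition As2 A B u := asin (h2 A B u).
Definition Fu A B u := /2 * (sqrt (RR A B u) + (A+B)/2 * As1 A B u - sqrt (A*B) * As2 A B u).

Lemma h1_bound A B u : 0 < A < B -> A < u < B -> -1 < h1 A B u < 1.
Proof.
  intros. unfold h1. split.
  - apply Rmult_lt_reg_r with (B - A); [lra|]. unfold Rdiv. rewrite Rmult_assoc, Rinv_l; lra.
  - apply Rmult_lt_reg_r with (B - A); [lra|]. unfold Rdiv. rewrite Rmult_assoc, Rinv_l; lra.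
Qed.

Lemma h2_bound A B u : 0 < A < B -> A < u < B -> -1 < h2 A B u < 1.
Proof.
  intros. unfold h2. assert (0 < u * (B - A)) by nra. split.
  - apply Rmult_lt_reg_r with (u * (B - A)); [lra|]. unfold Rdiv. rewrite Rmult_assoc, Rinv_l; nra.
  - apply Rmult_lt_reg_r with (u * (B - A)); [lra|]. unfold Rdiv. rewrite Rmult_assoc, Rinv_l; nra.
Qed.

Lemma sqrt1_h1 A B u : 0 < A < B -> A < u < B ->
  sqrt (1 - h1 A B u ^ 2) = 2 * sqrt (RR A B u) / (B - A).
Proof.
  intros. assert (HRR : 0 <= RR A B u) by (unfold RR; nra).
  replace (1 - h1 A B u ^ 2) with ((2/(B-A))^2 * RR A B u) by (unfold h1, RR; field; lra).
  rewrite sqrt_mult by (auto; nra). rewrite sqrt_pow2. field. lra.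
  apply Rlt_le, Rdiv_lt_0_compat; lra.
Qed.

Lemma sqrt1_h2 A B u : 0 < A < B -> A < u < B ->
  sqrt (1 - h2 A B u ^ 2) = 2 * sqrt (A*B) * sqrt (RR A B u) / (u * (B - A)).
Proof.
  intros. assert (HRR : 0 <= RR A B u) by (unfold RR; nra).
  replace (1 - h2 A B u ^ 2) with ((2/(u*(B-A)))^2 * ((A*B) * RR A B u)) by (unfold h2, RR; field; lra).
  rewrite sqrt_mult by (try apply pow2_ge_0; apply Rmult_le_pos; nra). rewrite sqrt_pow2. rewrite sqrt_mult by nra. field. nra.
  apply Rlt_le, Rdiv_lt_0_compat; nra.
Qed.

Lemma D_As1 A B u : 0 < A < B -> A < u < B ->
  is_derive (As1 A B) u (2/(B-A) * / sqrt (1 - h1 A B u ^ 2)).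
Proof.
  intros. unfold As1.
  apply (is_derive_comp asin (h1 A B) u (/ sqrt (1 - h1 A B u ^ 2)) (2/(B-A))).
  apply is_derive_asin, h1_bound; auto.
  unfold h1. auto_derive. lra. field. lra.
Qed.

Lemma D_As2 A B u : 0 < A < B -> A < u < B ->
  is_derive (As2 A B) u (2*A*B/((B-A)*u^2) * / sqrt (1 - h2 A B u ^ 2)).
Proof.
  intros. unfold As2.
  apply (is_derive_comp asin (h2 A B) u (/ sqrt (1 - h2 A B u ^ 2)) (2*A*B/((B-A)*u^2))).
  apply is_derive_asin, h2_bound; auto.
  unfold h2. auto_derive. nra. field. nra.
Qed.

Lemma D_RR A B u : is_derive (RR A B) u (A + B - 2*u).
Proof. unfold RR. auto_derive; auto. ring. Qed.

Lemma D_Fu A B u : 0 < A < B -> A < u < B ->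
  is_derive (Fu A B) u (sqrt (RR A B u) / (2*u)).
Proof.
  intros HAB Hu. assert (HRR : 0 < RR A B u) by (unfold RR; nra).
  eapply is_derive_eq.
  - unfold Fu. auto_derive.
    + split. eexists; apply D_RR. split. auto. split. eexists; apply D_As1; auto. split; auto. eexists; apply D_As2; auto.
    + reflexivity.
  - change (Derive (fun x => RR A B x) u) with (Derive (RR A B) u).
    change (Derive (fun x => As1 A B x) u) with (Derive (As1 A B) u).
    change (Derive (fun x => As2 A B x) u) with (Derive (As2 A B) u).
    rewrite (is_derive_unique _ _ _ (D_RR A B u)).
    rewrite (is_derive_unique _ _ _ (D_As1 A B u HAB Hu)).
    rewrite (is_derive_unique _ _ _ (D_As2 A B u HAB Hu)).
    rewrite sqrt1_h1, sqrt1_h2 by auto.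
    assert (Hs : 0 < sqrt (RR A B u)) by (apply sqrt_lt_R0; auto).
    assert (Hab : 0 < sqrt (A*B)) by (apply sqrt_lt_R0; nra).
    assert (Hss : sqrt (RR A B u) * sqrt (RR A B u) = RR A B u) by (apply sqrt_sqrt; lra).
    match goal with |- ?a = ?b => change (@eq R a b) end.
    set (s := sqrt (RR A B u)) in *. set (q := sqrt (A*B)) in *. clearbody s q.
    assert (Hrhs : s / (2*u) = RR A B u / (2*u*s)) by (rewrite <- Hss; field; lra).
    rewrite Hrhs. unfold RR. field. repeat split; lra.
Qed.

Definition gg A B r := sqrt (RR A B (r^2)) / r.

Lemma cplus (f g : R -> R) x : continuous f x -> continuous g x -> continuous (fun y => f y + g y) x.
Proof. intros. apply (continuous_plus f g); auto. Qed.
Lemma cmult (f g : R -> R) x : continuous f x -> continuous g x -> continuous (fun y => f y * g y) x.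
Proof. intros. apply (continuous_mult f g); auto. Qed.
Lemma cminus (f g : R -> R) x : continuous f x -> continuous g x -> continuous (fun y => f y - g y) x.
Proof. intros. apply (continuous_minus f g); auto. Qed.

Lemma cder (f : R -> R) x : ex_derive f x -> continuous f x.
Proof. intro H. exact (ex_derive_continuous (K := R_AbsRing) (V := R_NormedModule) f x H). Qed.

Lemma cont_gg A B x : 0 < x -> continuous (gg A B) x.
Proof.
  intros Hx. unfold gg.
  apply (cmult (fun r => sqrt (RR A B (r^2))) (fun r => / r)).
  - apply continuous_sqrt_comp. apply cder. unfold RR. auto_derive. auto.
  - apply cder. auto_derive. lra.
Qed.

Lemma D_F A B r : 0 < A < B -> 0 < r -> A < r^2 < B ->
  is_derive (fun r => Fu A B (r^2)) r (gg A B r).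
Proof.
  intros HAB Hr Hu.
  eapply is_derive_eq.
  apply (is_derive_comp (Fu A B) (fun r => r^2) r (sqrt (RR A B (r^2)) / (2*r^2)) (2*r)).
  apply D_Fu; auto. auto_derive; auto. ring.
  unfold gg. simpl. unfold scal; simpl; unfold mult; simpl. field. lra.
Qed.

Lemma cont_Fu_end A B u : 0 < A < B -> (u = A \/ u = B) -> continuous (Fu A B) u.
Proof.
  intros HAB Hu. unfold Fu.
  assert (Hc : forall (h : R -> R), (forall y, 0 < y -> continuous h y) -> (h u = 1 \/ h u = -1) -> continuous (fun y => asin (h y)) u).
  { intros h Hh Hv. apply (continuous_comp h asin). apply Hh; lra.
    destruct Hv as [-> | ->]. apply cont_asin_1. apply cont_asin_m1. }
  apply (cmult (fun _ => /2)). apply continuous_const.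
  apply cminus. apply cplus.
  - apply continuous_sqrt_comp. apply cder. unfold RR. auto_derive. auto.
  - apply (cmult (fun _ => (A+B)/2)). apply continuous_const.
    unfold As1. apply Hc.
    + intros y Hy. apply cder. unfold h1. auto_derive. lra.
    + unfold h1. destruct Hu as [-> | ->]; [right|left]; field; lra.
  - apply (cmult (fun _ => sqrt (A*B))). apply continuous_const.
    unfold As2. apply Hc.
    + intros y Hy. apply cder. unfold h2. auto_derive. nra.
    + unfold h2. destruct Hu as [-> | ->]; [right|left]; field; lra.
Qed.

Lemma int_gg a b : 0 < a < b -> RInt (gg (a^2) (b^2)) a b = PI*(b-a)^2/4.
Proof.
  intros Hab.
  assert (HAB : 0 < a^2 < b^2) by (split; nra).
  rewrite (FTC_open (gg (a^2) (b^2)) (fun r => Fu (a^2) (b^2) (r^2)) a b (a/2) (b+1)); try lra.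
  - unfold Fu, RR, As1, As2, h1, h2.
    replace ((2 * b ^ 2 - a ^ 2 - b ^ 2) / (b ^ 2 - a ^ 2)) with 1 by (field; nra).
    replace ((2 * a ^ 2 - a ^ 2 - b ^ 2) / (b ^ 2 - a ^ 2)) with (-1) by (field; nra).
    replace (((a ^ 2 + b ^ 2) * b ^ 2 - 2 * a ^ 2 * b ^ 2) / (b ^ 2 * (b ^ 2 - a ^ 2))) with 1 by (field; nra).
    replace (((a ^ 2 + b ^ 2) * a ^ 2 - 2 * a ^ 2 * b ^ 2) / (a ^ 2 * (b ^ 2 - a ^ 2))) with (-1) by (field; nra).
    replace (-1) with (- (1)) by ring. rewrite asin_opp, asin_1.
    replace (a^2*b^2) with ((a*b)^2) by ring. rewrite sqrt_pow2 by nra.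
    replace ((b ^ 2 - a ^ 2) * (b ^ 2 - b ^ 2)) with 0 by ring.
    replace ((a ^ 2 - a ^ 2) * (b ^ 2 - a ^ 2)) with 0 by ring.
    rewrite sqrt_0. match goal with |- ?x = ?y => change (@eq R x y) end. field.
  - intros x Hx. apply cont_gg. lra.
  - intros x Hx. apply D_F; auto. lra. split; nra.
  - apply (continuous_comp (fun r => r^2) (Fu (a^2) (b^2))).
    apply cder; auto_derive; auto. apply cont_Fu_end; auto.
  - apply (continuous_comp (fun r => r^2) (Fu (a^2) (b^2))).
    apply cder; auto_derive; auto. apply cont_Fu_end; auto.
Qed.


Lemma Qrad_poly rho xi E L r : 0 < r ->
  Qrad rho xi E L r = - ((xi - 2*rho*E) * (r^2)^2 - 2*E*r^2 + L^2) / r^2.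
Proof. intros. unfold Qrad. field. lra. Qed.

Lemma Ir_val rho xi E L a b : 0 < rho -> 0 < L -> 0 < xi - 2*rho*E ->
  0 < a -> a < b -> Qrad rho xi E L a = 0 -> Qrad rho xi E L b = 0 ->
  Ir rho xi E L a b + L = E / sqrt (xi - 2 * rho * E).
Proof.
  intros Hrho HL HD Ha Hab Qa Qb.
  set (D := xi - 2*rho*E) in *.
  rewrite Qrad_poly in Qa, Qb by lra. fold D in Qa, Qb.
  assert (Qa' : D * (a^2)^2 - 2*E*a^2 + L^2 = 0).
  { assert (0 < a^2) by nra. apply (f_equal (fun x => - x * a^2)) in Qa. field_simplify in Qa; lra. }
  assert (Qb' : D * (b^2)^2 - 2*E*b^2 + L^2 = 0).
  { assert (0 < b^2) by nra. apply (f_equal (fun x => - x * b^2)) in Qb. field_simplify in Qb; lra. }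
  assert (HAB : a^2 < b^2) by nra.
  assert (HE : D * (a^2 + b^2) = 2*E).
  { assert (Hf : (b^2 - a^2) * (D*(a^2+b^2) - 2*E) = 0) by nra.
    apply Rmult_integral in Hf. destruct Hf; lra. }
  assert (HL2 : L^2 = D * (a^2 * b^2)) by nra.
  set (sD := sqrt D).
  assert (HsD : sD * sD = D) by (apply sqrt_sqrt; lra).
  assert (HsD0 : 0 < sD) by (apply sqrt_lt_R0; lra).
  assert (HLv : L = sD * (a * b)).
  { assert (0 <= sD * (a*b)) by (apply Rmult_le_pos; nra).
    assert (Hq : L^2 = (sD * (a*b))^2) by (rewrite HL2; replace D with (sD*sD) by auto; ring).
    apply Rsqr_inj; try lra. unfold Rsqr. nra. }
  unfold Ir.
  rewrite (RInt_ext _ (fun r => sD * gg (a^2) (b^2) r)).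
  2:{ intros x Hx. rewrite Rmin_left, Rmax_right in Hx by lra.
      rewrite Qrad_poly by lra. fold D.
      unfold gg. set (u := x^2).
      assert (Hu : a^2 < u < b^2) by (unfold u; split; nra).
      assert (HR : 0 <= RR (a^2) (b^2) u) by (unfold RR; nra).
      assert (Hx0 : 0 < x) by lra.
      replace (- (D * u ^ 2 - 2 * E * u + L ^ 2) / u) with ((sD * (sqrt (RR (a^2) (b^2) u) / x))^2).
      + rewrite sqrt_pow2. auto. apply Rmult_le_pos; [lra|]. apply Rdiv_le_0_compat; [apply sqrt_pos|lra].
      + replace ((sD * (sqrt (RR (a ^ 2) (b ^ 2) u) / x)) ^ 2) with ((sD*sD) * (sqrt (RR (a ^ 2) (b ^ 2) u) * sqrt (RR (a ^ 2) (b ^ 2) u)) / x^2) by (field; lra).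
        rewrite HsD, sqrt_sqrt by auto. unfold RR. rewrite HL2.
        replace E with (D * (a^2+b^2)/2) by lra. unfold u. field. lra. }
  assert (Hs : RInt (fun r => sD * gg (a^2) (b^2) r) a b = sD * RInt (gg (a^2) (b^2)) a b).
  { apply (RInt_scal (gg (a^2) (b^2)) a b sD).
    apply ex_RInt_continuous. intros z Hz. rewrite Rmin_left, Rmax_right in Hz by lra. apply cont_gg. lra. }
  rewrite Hs.
  rewrite int_gg by lra.
  rewrite HLv. replace E with (sD * sD * (a^2+b^2)/2) by (rewrite HsD; lra).
  field. split; [lra|]. apply PI_neq0.
Qed.

Theorem proposition20 (rho xi E L : R) :
  0 < rho -> 0 < xi -> 0 < L ->
  E_plus rho xi L < E -> E < xi / (2 * rho) ->
  let J := E / sqrt (xi - 2 * rho * E) in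
  (* action I_phi *)
  Iphi L = L /\
  (* J = I_r + I_phi, for the closed radial curve between its turning points *)
  (forall a b : R, 0 < a -> a < b ->
     Qrad rho xi E L a = 0 -> Qrad rho xi E L b = 0 ->
     (forall x, a < x < b -> 0 < Qrad rho xi E L x) ->
     Ir rho xi E L a b + Iphi L = J) /\
  (* the Hamiltonian in action variables *)
  E = J * (sqrt (xi + rho ^ 2 * J ^ 2) - rho * J) /\
  (* values of the quadratic integrals along the trajectory *)
  (forall (r phi pr pphi : R -> R) (t0 : R),
     hamilton_solution rho xi r phi pr pphi ->
     (forall t, 0 < r t) ->
     H0 rho xi (r 0) (pr 0) (pphi 0) = E -> pphi 0 = L ->
     (forall t, r t0 <= r t) -> phi t0 = 0 ->
     forall t,
       S1 rho xi (r t) (phi t) (pr t) (pphi t) = 0 /\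
       S2 rho xi (r t) (phi t) (pr t) (pphi t) =
         - sqrt (J ^ 2 - (Iphi L) ^ 2) * (sqrt (xi + rho ^ 2 * J ^ 2) - rho * J)).
Proof.
  intros Hrho Hxi HL HEp HE2 J.
  pose proof (Eplus_pos rho xi L Hrho Hxi HL) as HEp0.
  assert (HE0 : 0 < E) by lra.
  assert (HD : 0 < xi - 2*rho*E).
  { apply Rmult_lt_compat_r with (r := 2*rho) in HE2; [|lra].
    unfold Rdiv in HE2. rewrite Rmult_assoc, Rinv_l in HE2; lra. }
  pose proof (disc_pos rho xi E L Hrho Hxi HL HEp) as Hdisc.
  pose proof (key_sqrt rho xi E Hrho HE0 HE2) as Hk. cbv zeta in Hk. fold J in Hk.
  set (sD := sqrt (xi - 2 * rho * E)) in *.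
  assert (HsD : sD * sD = xi - 2*rho*E) by (apply sqrt_sqrt; lra).
  assert (HsD0 : 0 < sD) by (apply sqrt_lt_R0; lra).
  split; [apply Iphi_eq|].
  split.
  { intros a b Ha Hab Qa Qb _. rewrite Iphi_eq. apply Ir_val; auto. }
  split.
  { rewrite Hk. unfold J. field. lra. }
  intros r phi pr pphi t0 HS Hr HH0 Hp0 Hmin Hphi t.
  destruct (dyn rho xi E L r phi pr pphi t0 Hrho Hxi HL HE2 Hdisc HE0 HS Hr HH0 Hp0 Hmin Hphi t) as [H1 H2].
  split; auto. rewrite H2, Hk, Iphi_eq.
  assert (HJ : J^2 - L^2 = (E^2 - (xi - 2*rho*E)*L^2) / (sD*sD)).
  { unfold J. rewrite <- HsD. field. lra. }
  rewrite HJ.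
  assert (Hpos : 0 <= (E^2 - (xi - 2*rho*E)*L^2) / (sD*sD)).
  { apply Rdiv_le_0_compat; nra. }
  assert (HX : 0 <= E^2 - (xi - 2*rho*E)*L^2) by lra.
  rewrite (sqrt_lem_1 ((E^2 - (xi - 2*rho*E)*L^2) / (sD*sD)) (sqrt (E^2 - (xi - 2*rho*E)*L^2) / sD)); auto.
  - field. lra.
  - apply Rdiv_le_0_compat; [apply sqrt_pos | lra].
  - replace (sqrt (E ^ 2 - (xi - 2 * rho * E) * L ^ 2) / sD * (sqrt (E ^ 2 - (xi - 2 * rho * E) * L ^ 2) / sD))
      with ((sqrt (E ^ 2 - (xi - 2 * rho * E) * L ^ 2) * sqrt (E ^ 2 - (xi - 2 * rho * E) * L ^ 2)) / (sD * sD)) by (field; lra).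
    rewrite sqrt_sqrt; auto.
Qed.
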